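(* There exists $C_1>0$ such that for every $n\ge1$, every choice of integers $b_1,\dots,b_n\ge2$ and signs $\varepsilon_1,\dots,\varepsilon_n\in\{\pm1\}$, with $x=[\langle b_j:\varepsilon_j\rangle_{j=1}^n]$, and all $z,w\in\mathcal{F}_n(x)$, \[\frac1{C_1}\le\left|\frac{(G^{\circ n})'(z)}{(G^{\circ n})'(w)}\right|\le C_1.\]
   Context: For $x\in\mathbb{R}$, $[x]$ denotes the closest integer to $x$ with the convention $x\in([x]-1/2,[x]+1/2]$ for $x>0$, $x\in[[x]-1/2,[x]+1/2)$ for $x<0$, and $[0]=0$. $G(z)=-1/z-[\operatorname{Re}(-1/z)]$ for $z\ne0$. $[\langle b_j:\varepsilon_j\rangle_{j=1}^n]=\cfrac{\varepsilon_1}{b_1+\cfrac{\varepsilon_2}{\ddots+\cfrac{\varepsilon_n}{b_n}}}$. For an integer $b\ge2$ and $s\in\{\pm1\}$, $D(s/b)=\{-1/w:w\in B(-sb,1/2)\}$, on which $G$ is a holomorphic bijection onto $B(0,1/2)$. For $x=[\langle b_j:\varepsilon_j\rangle_{j=1}^n]$, let $s_k$ be the sign of $G^{\circ(k-1)}(x)$, and $\mathcal{F}_n(x)$ the set of $z$ with $G^{\circ k}(z)$ defined and in $D(s_{k+1}/b_{k+1})$ for all $0\le k\le n-1$; $\mathcal{F}_n$ is the collection of these round disks, on each of which $G^{\circ n}$ is a M\''obius bijection into $B(0,1/2)$. *)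

(* Defs.v *)
From Stdlib Require Import Reals ZArith Lra.
From Coquelicot Require Import Coquelicot.
Open Scope R_scope.

(* Closest integer [x] with the paper's tie-breaking convention:
   x > 0 : x in ([x]-1/2, [x]+1/2]  i.e. [x] = ceil(x - 1/2)
   x <= 0: x in [[x]-1/2, [x]+1/2)  i.e. [x] = floor(x + 1/2)  (gives [0] = 0). *)
Definition nint (x : R) : Z :=
  if Rlt_dec 0 x then (- Int_part (- (x - /2)))%Z else Int_part (x + /2).

(* G(z) = -1/z - [Re(-1/z)]  (only meaningful for z <> 0). *)
Definition G (z : C) : C :=
  Cminus (Copp (Cinv z)) (RtoC (IZR (nint (Re (Copp (Cinv z)))))).

Definition Giter (k : nat) : C -> C := Nat.iter k G.

(* [<b_j : e_j>_{j=k}^{k+m-1}] = e_k/(b_k + e_{k+1}/(... + e_{k+m-1}/b_{k+m-1})) *)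
Fixpoint cfrac (b e : nat -> Z) (k m : nat) : R :=
  match m with
  | O => 0
  | S m' => IZR (e k) / (IZR (b k) + cfrac b e (S k) m')
  end.

Definition rsign (t : R) : R :=
  if Rlt_dec 0 t then 1 else if Rlt_dec t 0 then -1 else 0.

(* D(s/b) = { -1/w : w in B(-s b, 1/2) } *)
Definition inD (s : R) (b : Z) (u : C) : Prop :=
  exists w : C, Cmod (Cplus w (RtoC (s * IZR b))) < /2 /\ u = Copp (Cinv w).

Definition sgnk (x : R) (k : nat) : R := rsign (Re (Giter (k - 1) (RtoC x))).

(* z in F_n(x): for 0 <= k <= n-1, G^k(z) is defined (all previous iterates
   are nonzero) and G^k(z) lies in D(s_{k+1}/b_{k+1}). *)
Definition inF (n : nat) (b : nat -> Z) (x : R) (z : C) : Prop :=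
  (forall k : nat, (k < n)%nat -> Giter k z <> RtoC 0) /\
  (forall k : nat, (k < n)%nat -> inD (sgnk x (S k)) (b (S k)) (Giter k z)).

(* Main.v *)
Require Import Defs.
From Stdlib Require Import Reals ZArith Lra Lia.
From Coquelicot Require Import Coquelicot.
Open Scope R_scope.

Lemma Cinv_der (u : C) : u <> 0 -> @is_derive C_AbsRing (AbsRing_NormedModule C_AbsRing) Cinv u (- / (u*u))%C.
Proof.
  intro Hu. split; [apply is_linear_scal_l|].
  intros x Hx. apply (@is_filter_lim_locally_unique _ (AbsRing_NormedModule C_AbsRing)) in Hx. subst x.
  intro eps. apply (@locally_le_locally_norm C_AbsRing (AbsRing_NormedModule C_AbsRing) u).
  assert (HU : 0 < Cmod u) by (apply Cmod_gt_0; auto).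
  set (d := Rmin (Cmod u / 2) (eps * (Cmod u * Cmod u * Cmod u) / 2)).
  assert (Hd : 0 < d).
  { apply Rmin_pos. lra. pose proof (cond_pos eps). apply Rmult_lt_0_compat; [|lra].
    apply Rmult_lt_0_compat; auto. apply Rmult_lt_0_compat; auto. apply Rmult_lt_0_compat; auto. }
  exists (mkposreal _ Hd). intros y Hy. unfold ball_norm in Hy.
  change (Cmod (y - u)%C < d) in Hy.
  pose proof (Rmin_l (Cmod u / 2) (eps * (Cmod u * Cmod u * Cmod u) / 2)).
  pose proof (Rmin_r (Cmod u / 2) (eps * (Cmod u * Cmod u * Cmod u) / 2)).
  fold d in H, H0.
  set (r := Cmod (y - u)%C) in *.
  assert (HY : Cmod u / 2 < Cmod y).
  { pose proof (Cmod_triangle (y - u)%C (- y)%C). rewrite Cmod_opp in H1.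
    replace ((y - u) + - y)%C with (- u)%C in H1 by ring. rewrite Cmod_opp in H1. fold r in H1. lra. }
  assert (Hy0 : @eq C y (RtoC 0) -> False). { intro E. subst y. rewrite Cmod_0 in HY. lra. }
  change (Cmod ((/ y - / u) - (y - u) * (- / (u * u)))%C <= eps * r).
  replace ((/ y - / u) - (y - u) * (- / (u * u)))%C
    with ((y - u) * (y - u) / (y * u * u))%C by (field; auto).
  rewrite Cmod_div. 2:{ apply Cmult_neq_0; auto. apply Cmult_neq_0; auto. }
  rewrite !Cmod_mult. fold r.
  assert (Hr : 0 <= r) by apply Cmod_ge_0.
  pose proof (cond_pos eps) as He.
  apply Rle_div_l. { apply Rmult_lt_0_compat; [|lra]. apply Rmult_lt_0_compat; lra. }
  assert (r <= eps * (Cmod y * Cmod u * Cmod u)).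
  { apply Rlt_le. apply Rlt_le_trans with (eps * (Cmod u * Cmod u * Cmod u) / 2). lra.
    assert (eps * (Cmod u/2) * Cmod u * Cmod u <= eps * Cmod y * Cmod u * Cmod u).
    { repeat apply Rmult_le_compat_r; try lra. apply Rmult_le_compat_l; lra. }
    lra. }
  replace (eps * r * (Cmod y * Cmod u * Cmod u)) with (r * (eps * (Cmod y * Cmod u * Cmod u))) by ring.
  apply Rmult_le_compat_l; auto.
Qed.

Lemma Int_part_eq (k : Z) (t : R) : IZR k <= t < IZR k + 1 -> Int_part t = k.
Proof.
  intros [H1 H2]. destruct (base_Int_part t) as [A B].
  assert (IZR (Int_part t) < IZR (k + 1)) by (rewrite plus_IZR; lra).
  assert (IZR k < IZR (Int_part t + 1)) by (rewrite plus_IZR; lra).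
  apply lt_IZR in H. apply lt_IZR in H0. lia.
Qed.

Lemma nint_near (r : R) (m : Z) : Rabs (r - IZR m) < /2 -> nint r = m.
Proof.
  intro H. apply Rabs_def2 in H. destruct H as [H1 H2].
  unfold nint. destruct (Rlt_dec 0 r).
  - rewrite (Int_part_eq (- m)). lia. rewrite opp_IZR. lra.
  - apply Int_part_eq. lra.
Qed.

Lemma G_loc (m : Z) (y : C) : Cmod (Copp (Cinv y) - RtoC (IZR m))%C < /2 ->
  G y = (Copp (Cinv y) - RtoC (IZR m))%C.
Proof.
  intro H. unfold G. rewrite (nint_near _ m). reflexivity.
  eapply Rle_lt_trans; [|exact H].
  replace (Re (- / y)%C - IZR m) with (Re (- / y - RtoC (IZR m))%C).
  apply re_le_Cmod. unfold Cminus. rewrite re_plus, !re_opp, re_RtoC. ring.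
Qed.

Lemma G_der (m : Z) (u : C) : u <> 0 -> Cmod (Copp (Cinv u) - RtoC (IZR m))%C < /2 ->
  @is_derive C_AbsRing (AbsRing_NormedModule C_AbsRing) G u (/ (u * u))%C.
Proof.
  intros Hu H.
  set (g := fun y => (Copp (Cinv y) - RtoC (IZR m))%C).
  assert (D : @is_derive C_AbsRing (AbsRing_NormedModule C_AbsRing) g u (/ (u*u))%C).
  { pose proof (Cinv_der u Hu) as D1.
    apply (is_derive_opp (K := C_AbsRing) (V := AbsRing_NormedModule C_AbsRing)) in D1.
    pose proof (is_derive_plus (K := C_AbsRing) (V := AbsRing_NormedModule C_AbsRing) _ _ u _ _ D1
       (is_derive_const (K := C_AbsRing) (V := AbsRing_NormedModule C_AbsRing) (Copp (RtoC (IZR m))) u)) as D2.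
    replace (/ (u*u))%C with (plus (opp (- / (u * u))%C) (@zero (AbsRing_NormedModule C_AbsRing))).
    2:{ change (- - / (u * u) + 0 = / (u * u))%C. ring. }
    eapply is_derive_ext; [|exact D2]. intro t. reflexivity. }
  apply (is_derive_ext_loc (K := C_AbsRing) (V := AbsRing_NormedModule C_AbsRing) g). 2: exact D.
  pose proof (ex_derive_continuous (K := C_AbsRing) (V := AbsRing_NormedModule C_AbsRing) g u (ex_intro _ _ D)) as Hc.
  assert (Hl : @locally (AbsRing_UniformSpace C_AbsRing) (g u) (fun v : C => Cmod v < /2)).
  { apply (@locally_le_locally_norm C_AbsRing (AbsRing_NormedModule C_AbsRing)).
    assert (Hp : 0 < /2 - Cmod (g u)) by (unfold g; lra).
    exists (mkposreal _ Hp). intros v Hv. unfold ball_norm in Hv. simpl in Hv. change C in v.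
    change (Cmod (v - g u)%C < / 2 - Cmod (g u)) in Hv.
    pose proof (Cmod_triangle (v - g u)%C (g u)).
    replace (v - g u + g u)%C with v in H0 by ring. lra. }
  specialize (Hc _ Hl). simpl in Hc.
  eapply filter_imp; [|exact Hc]. intros y Hy. simpl in Hy.
  symmetry. apply G_loc. exact Hy.
Qed.

Definition ev (p : C * C) (u : C) : C := (fst p * u + snd p)%C.

Fixpoint ND (c : nat -> Z) (m : nat) : (C * C) * (C * C) :=
  match m with
  | O => ((RtoC 1, RtoC 0), (RtoC 0, RtoC 1))
  | S m' => let p := ND (fun j => c (S j)) m' in
     ((Copp (fst (snd p)), Copp (snd (snd p))),
      (fst (fst p) + RtoC (IZR (c O)) * fst (snd p),
       snd (fst p) + RtoC (IZR (c O)) * snd (snd p))%C)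
  end.

Lemma evN_S c m u : ev (fst (ND c (S m))) u = Copp (ev (snd (ND (fun j => c (S j)) m)) u).
Proof. unfold ev; simpl. ring. Qed.
Lemma evD_S c m u : ev (snd (ND c (S m))) u =
  (ev (fst (ND (fun j => c (S j)) m)) u + RtoC (IZR (c O)) * ev (snd (ND (fun j => c (S j)) m)) u)%C.
Proof. unfold ev; simpl. ring. Qed.

Definition good (c : Z) (u : C) : Prop := u <> 0 /\ Cmod (Copp (Cinv u) - RtoC (IZR c))%C < /2.

Lemma ND_bound (m : nat) : forall c u, (forall k, (k < m)%nat -> 2 <= Rabs (IZR (c k))) ->
  Cmod u < 1 -> Cmod (ev (fst (ND c m)) u) < Cmod (ev (snd (ND c m)) u).
Proof.
  induction m as [|m IH]; intros c u Hc Hu.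
  - unfold ev; simpl. replace (1 * u + 0)%C with u by ring. replace (0 * u + 1)%C with (RtoC 1) by ring.
    rewrite Cmod_1. exact Hu.
  - rewrite evN_S, evD_S, Cmod_opp.
    assert (Hc' : forall k, (k < m)%nat -> 2 <= Rabs (IZR (c (S k)))) by (intros; apply Hc; lia).
    specialize (IH _ u Hc' Hu).
    set (N := ev (fst (ND (fun j => c (S j)) m)) u) in *.
    set (D := ev (snd (ND (fun j => c (S j)) m)) u) in *.
    pose proof (Cmod_triangle (N + RtoC (IZR (c O)) * D)%C (- N)%C).
    replace (N + RtoC (IZR (c O)) * D + - N)%C with (RtoC (IZR (c O)) * D)%C in H by ring.
    rewrite Cmod_opp, Cmod_mult, Cmod_R in H.
    assert (2 <= Rabs (IZR (c O))) by (apply Hc; lia).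
    pose proof (Cmod_ge_0 N).
    assert (2 * Cmod D <= Rabs (IZR (c O)) * Cmod D) by (apply Rmult_le_compat_r; [apply Cmod_ge_0|lra]).
    lra.
Qed.

Lemma rel (m : nat) : forall c z, (forall k, (k < m)%nat -> good (c k) (Giter k z)) ->
  (forall k, (k < m)%nat -> 2 <= Rabs (IZR (c k))) -> Cmod (Giter m z) < 1 ->
  (z * ev (snd (ND c m)) (Giter m z) = ev (fst (ND c m)) (Giter m z))%C.
Proof.
  induction m as [|m IH]; intros c z Hg Hc Hu.
  - unfold ev; simpl. ring.
  - assert (E : Giter (S m) z = Giter m (G z)) by (unfold Giter; apply Nat.iter_succ_r).
    rewrite E in *. rewrite evN_S, evD_S.
    assert (Hg' : forall k, (k < m)%nat -> good (c (S k)) (Giter k (G z))).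
    { intros k Hk. replace (Giter k (G z)) with (Giter (S k) z) by (unfold Giter; apply Nat.iter_succ_r). apply (Hg (S k)). lia. }
    assert (Hc' : forall k, (k < m)%nat -> 2 <= Rabs (IZR (c (S k)))) by (intros; apply Hc; lia).
    specialize (IH _ _ Hg' Hc' Hu).
    destruct (Hg O ltac:(lia)) as [Hz0 Hz]. simpl in Hz.
    set (N := ev (fst (ND (fun j => c (S j)) m)) (Giter m (G z))) in *.
    set (D := ev (snd (ND (fun j => c (S j)) m)) (Giter m (G z))) in *.
    rewrite <- IH. rewrite (G_loc _ _ Hz). field. exact Hz0.
Qed.

Lemma deriv (m : nat) : forall c z, (forall k, (k < m)%nat -> good (c k) (Giter k z)) ->
  (forall k, (k < m)%nat -> 2 <= Rabs (IZR (c k))) -> Cmod (Giter m z) < 1 ->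
  is_derive (Giter m) z (ev (snd (ND c m)) (Giter m z) * ev (snd (ND c m)) (Giter m z))%C.
Proof.
  induction m as [|m IH]; intros c z Hg Hc Hu.
  - unfold ev; simpl.
    replace ((0 * z + 1) * (0 * z + 1))%C with (@one C_AbsRing) by (change (RtoC 1 = ((0 * z + 1) * (0 * z + 1))%C); ring).
    split; [apply is_linear_scal_l|]. intros x Hx eps. apply filter_forall. intro y.
    change (Cmod ((y - x) - (y - x) * 1)%C <= eps * Cmod (y - x)%C).
    replace ((y - x) - (y - x) * 1)%C with (RtoC 0) by ring. rewrite Cmod_0.
    pose proof (cond_pos eps). pose proof (Cmod_ge_0 (y - x)%C). nra.
  - pose proof (rel (S m) c z Hg Hc Hu) as R.
    assert (E : forall t, Giter (S m) t = Giter m (G t)) by (intro; unfold Giter; apply Nat.iter_succ_r).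
    rewrite E in *. rewrite evN_S in R. rewrite evD_S in *.
    assert (Hg' : forall k, (k < m)%nat -> good (c (S k)) (Giter k (G z))).
    { intros k Hk. replace (Giter k (G z)) with (Giter (S k) z) by (unfold Giter; apply Nat.iter_succ_r). apply (Hg (S k)). lia. }
    assert (Hc' : forall k, (k < m)%nat -> 2 <= Rabs (IZR (c (S k)))) by (intros; apply Hc; lia).
    specialize (IH _ _ Hg' Hc' Hu).
    destruct (Hg O ltac:(lia)) as [Hz0 Hz]. simpl in Hz.
    change (z <> 0) in Hz0. pose proof (G_der _ _ Hz0 Hz) as DG.
    pose proof (is_derive_comp (Giter m) G z _ _ IH DG) as DC.
    apply (is_derive_ext (fun t => Giter m (G t))). intro t. symmetry. apply E.
    set (N := ev (fst (ND (fun j => c (S j)) m)) (Giter m (G z))) in *.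
    set (D := ev (snd (ND (fun j => c (S j)) m)) (Giter m (G z))) in *.
    replace ((N + RtoC (IZR (c O)) * D) * (N + RtoC (IZR (c O)) * D))%C with
      (scal (/ (z * z))%C (D * D)%C). exact DC.
    change (/ (z * z) * (D * D) = (N + RtoC (IZR (c O)) * D) * (N + RtoC (IZR (c O)) * D))%C.
    replace D with (- (z * (N + RtoC (IZR (c O)) * D)))%C at 1 2 by (rewrite R; ring).
    field. exact Hz0.
Qed.

Lemma final_bound (A B u v : C) : (forall t, Cmod t < 1 -> (A * t + B)%C <> 0) ->
  Cmod u < /2 -> Cmod v < /2 ->
  / 9 <= Cmod (((A * u + B) * (A * u + B)) / ((A * v + B) * (A * v + B)))%C <= 9.
Proof.
  intros H Hu Hv.
  assert (HB : B <> 0).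
  { intro E. apply (H (RtoC 0)). rewrite Cmod_0; lra. rewrite E. ring. }
  assert (HAB : Cmod A <= Cmod B).
  { destruct (Rle_lt_dec (Cmod A) (Cmod B)) as [|Hlt]; auto. exfalso.
    assert (HA : A <> 0). { intro E. rewrite E, Cmod_0 in Hlt. pose proof (Cmod_ge_0 B). lra. }
    apply (H (- B / A)%C).
    - rewrite Cmod_div, Cmod_opp by auto. apply Cmod_gt_0 in HA.
      apply (Rmult_lt_reg_r (Cmod A)); auto. unfold Rdiv. rewrite Rmult_assoc, Rinv_l by lra. lra.
    - field. auto. }
  assert (HB' : 0 < Cmod B) by (apply Cmod_gt_0; auto).
  assert (Hbnd : forall t, Cmod t < /2 -> Cmod B / 2 <= Cmod (A * t + B)%C <= 3 * Cmod B / 2).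
  { intros t Ht. pose proof (Cmod_ge_0 t).
    assert (Cmod A * Cmod t <= Cmod B / 2).
    { apply Rle_trans with (Cmod B * / 2). apply Rmult_le_compat; try apply Cmod_ge_0; lra. lra. }
    split.
    - pose proof (Cmod_triangle (A * t + B)%C (- (A * t))%C).
      replace (A * t + B + - (A * t))%C with B in H2 by ring.
      rewrite Cmod_opp, Cmod_mult in H2. lra.
    - pose proof (Cmod_triangle (A * t)%C B). rewrite Cmod_mult in H2. lra. }
  destruct (Hbnd u Hu) as [a1 a2]. destruct (Hbnd v Hv) as [d1 d2].
  assert (Hd0 : (A * v + B)%C <> 0). { intro E. rewrite E, Cmod_0 in d1. lra. }
  rewrite Cmod_div by (apply Cmult_neq_0; auto).
  rewrite !Cmod_mult.
  set (a := Cmod (A * u + B)%C) in *. set (d := Cmod (A * v + B)%C) in *.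
  assert (Hd : 0 < d * d) by (apply Rmult_lt_0_compat; lra).
  split.
  - apply Rle_div_r; auto. nra.
  - apply Rle_div_l; auto. nra.
Qed.

Lemma Cinv_0 : Cinv (RtoC 0) = RtoC 0.
Proof. unfold Cinv, RtoC; simpl. f_equal; unfold Rdiv; ring. Qed.

Lemma cfrac_bound (b e : nat -> Z) (m : nat) : forall k,
  (forall j, (k <= j < k + m)%nat -> (2 <= b j)%Z) ->
  (forall j, (k <= j < k + m)%nat -> e j = 1%Z \/ e j = (-1)%Z) ->
  Rabs (cfrac b e k m) <= 1.
Proof.
  induction m as [|m IH]; intros k Hb He; simpl.
  - rewrite Rabs_R0; lra.
  - assert (H1 : Rabs (cfrac b e (S k) m) <= 1) by (apply IH; intros; [apply Hb|apply He]; lia).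
    assert (H2 : 2 <= IZR (b k)) by (apply IZR_le; apply Hb; lia).
    apply Rabs_le_between in H1.
    unfold Rdiv. rewrite Rabs_mult, Rabs_inv.
    assert (Rabs (IZR (e k)) = 1) by (destruct (He k ltac:(lia)) as [E|E]; rewrite E; unfold Rabs; destruct Rcase_abs; lra).
    rewrite H. rewrite Rabs_pos_eq by lra.
    rewrite Rmult_1_l. rewrite <- Rinv_1. apply Rinv_le_contravar; lra.
Qed.

Lemma cfrac_nz (b e : nat -> Z) (n : nat) : (1 <= n)%nat ->
  (forall j, (1 <= j <= n)%nat -> (2 <= b j)%Z) ->
  (forall j, (1 <= j <= n)%nat -> e j = 1%Z \/ e j = (-1)%Z) ->
  cfrac b e 1 n <> 0.
Proof.
  intros Hn Hb He. destruct n as [|n]; [lia|]. simpl.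
  assert (H1 : Rabs (cfrac b e 2 n) <= 1) by (apply cfrac_bound; intros; [apply Hb|apply He]; lia).
  assert (H2 : 2 <= IZR (b 1%nat)) by (apply IZR_le; apply Hb; lia).
  apply Rabs_le_between in H1.
  assert (IZR (e 1%nat) <> 0) by (destruct (He 1%nat ltac:(lia)) as [E|E]; rewrite E; lra).
  unfold Rdiv. apply Rmult_integral_contrapositive_currified; auto.
  apply Rinv_neq_0_compat. lra.
Qed.

Definition sz (t : R) : Z := if Rlt_dec 0 t then 1%Z else if Rlt_dec t 0 then (-1)%Z else 0%Z.
Lemma rsign_sz t : rsign t = IZR (sz t).
Proof. unfold rsign, sz. destruct (Rlt_dec 0 t); auto. destruct (Rlt_dec t 0); auto. Qed.
Lemma sz_nz t : t <> 0 -> sz t <> 0%Z.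
Proof. intro H. unfold sz. destruct (Rlt_dec 0 t); [lia|]. destruct (Rlt_dec t 0); [lia|]. lra. Qed.
Lemma sz_cases t : sz t = 1%Z \/ sz t = (-1)%Z \/ sz t = 0%Z.
Proof. unfold sz. destruct (Rlt_dec 0 t); auto. destruct (Rlt_dec t 0); auto. Qed.

Lemma inD_good (s bb : Z) (u : C) : inD (IZR s) bb u -> u <> 0 ->
  good (- (s * bb))%Z u /\ Cmod (G u) < /2.
Proof.
  intros [w [Hw Eu]] Hu.
  assert (Hw0 : w <> 0). { intro E. apply Hu. rewrite Eu, E, Cinv_0. ring. }
  assert (Ew : (- / u)%C = w). { rewrite Eu. field. auto. }
  assert (Hg : Cmod (- / u - RtoC (IZR (- (s * bb))))%C < /2).
  { rewrite Ew. rewrite opp_IZR, mult_IZR, RtoC_opp.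
    replace (w - - RtoC (IZR s * IZR bb))%C with (w + RtoC (IZR s * IZR bb))%C by ring. exact Hw. }
  split. split; auto. rewrite (G_loc _ _ Hg). exact Hg.
Qed.

Theorem lemma6p6 :
  exists C1 : R, 0 < C1 /\
  forall (n : nat) (b e : nat -> Z),
    (1 <= n)%nat ->
    (forall j : nat, (1 <= j <= n)%nat -> (2 <= b j)%Z) ->
    (forall j : nat, (1 <= j <= n)%nat -> e j = 1%Z \/ e j = (-1)%Z) ->
    forall (z w dz dw : C),
      inF n b (cfrac b e 1 n) z ->
      inF n b (cfrac b e 1 n) w ->
      is_derive (Giter n) z dz ->
      is_derive (Giter n) w dw ->
      / C1 <= Cmod (Cdiv dz dw) <= C1.
Proof.
  exists 9. split; [lra|].
  intros n b e Hn Hb He z w dz dw Fz Fw Dz Dw.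
  assert (Hx : cfrac b e 1 n <> 0) by (apply cfrac_nz; auto).
  set (x := cfrac b e 1 n) in *.
  set (sk := fun k => sz (Re (Giter k (RtoC x)))).
  assert (Hsgn : forall k, sgnk x (S k) = IZR (sk k)).
  { intro k. unfold sgnk. rewrite Nat.sub_succ, Nat.sub_0_r. apply rsign_sz. }
  set (c := fun k => (- (sk k * b (S k)))%Z).
  assert (Hpt : forall y, inF n b x y ->
    (forall k, (k < n)%nat -> good (c k) (Giter k y)) /\
    (forall k, (k < n)%nat -> Cmod (G (Giter k y)) < /2)).
  { intros y [Hy1 Hy2]. split; intros k Hk; specialize (Hy2 k Hk); rewrite Hsgn in Hy2;
      destruct (inD_good _ _ _ Hy2 (Hy1 k Hk)); auto. }
  assert (Hsk : forall k, (k < n)%nat -> sk k <> 0%Z).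
  { intros k Hk. destruct k as [|k].
    - unfold sk. apply sz_nz. change (Re (RtoC x) <> 0). rewrite re_RtoC. exact Hx.
    - intro E. pose proof (proj2 (Hpt z Fz) k ltac:(lia)) as HG.
      destruct Fz as [Hz1 Hz2]. pose proof (Hz2 (S k) Hk) as HD. rewrite Hsgn, E in HD.
      destruct HD as [w0 [Hw0 Ew0]].
      change (Giter (S k) z) with (G (Giter k z)) in Ew0.
      assert (Hw00 : w0 <> 0).
      { intro E0. apply (Hz1 (S k) Hk). change (G (Giter k z) = 0). rewrite Ew0, E0, Cinv_0. ring. }
      replace (w0 + RtoC (IZR 0 * IZR (b (S (S k)))))%C with w0 in Hw0
        by (rewrite Rmult_0_l; ring).
      rewrite Ew0, Cmod_opp, Cmod_inv in HG by auto.
      apply Cmod_gt_0 in Hw00.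
      assert (/ Cmod w0 > 2).
      { replace 2 with (/ / 2) by field. apply Rinv_lt_contravar; [apply Rmult_lt_0_compat|]; lra. }
      lra. }
  assert (Hc2 : forall k, (k < n)%nat -> 2 <= Rabs (IZR (c k))).
  { intros k Hk. unfold c. rewrite <- abs_IZR. apply IZR_le.
    pose proof (Hsk k Hk). pose proof (Hb (S k) ltac:(lia)).
    assert (sk k = 1%Z \/ sk k = (-1)%Z \/ sk k = 0%Z) by (unfold sk; apply sz_cases).
    destruct H1 as [E|[E|E]]; rewrite E; lia. }
  assert (Hend : forall y, inF n b x y -> Cmod (Giter n y) < /2).
  { intros y Fy. destruct n as [|n']; [lia|].
    change (Cmod (G (Giter n' y)) < /2). apply (proj2 (Hpt y Fy)). lia. }
  assert (Hder : forall y dy, inF n b x y -> is_derive (Giter n) y dy ->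
     dy = (ev (snd (ND c n)) (Giter n y) * ev (snd (ND c n)) (Giter n y))%C).
  { intros y dy Fy Dy. rewrite <- (is_C_derive_unique _ _ _ Dy).
    apply is_C_derive_unique. apply deriv. apply (proj1 (Hpt y Fy)). exact Hc2.
    pose proof (Hend y Fy). lra. }
  rewrite (Hder z dz Fz Dz), (Hder w dw Fw Dw).
  unfold ev. apply final_bound; [| apply Hend; auto | apply Hend; auto].
  intros t Ht E. pose proof (ND_bound n c t Hc2 Ht) as HB.
  change (ev (snd (ND c n)) t = 0) in E. rewrite E, Cmod_0 in HB.
  pose proof (Cmod_ge_0 (ev (fst (ND c n)) t)). lra.
Qed.
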